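(* Let $\theta_1,\theta_2>0$ and consider on $[0,1]^3$ the system $\dot x = x(1-x)(0.5ry-0.5y+0.5)$, $\dot y = y(1-y)(0.5rx-0.5x-0.5r)$, $\dot r = r(1-r)[(1+\theta_1)x+(1+\theta_2)y-2]$. For every initial condition $(x_0,y_0,r_0)\in(0,1)^3$, the solution satisfies $x(t)\to1$ and $y(t)\to0$ as $t\to\infty$; moreover $r(t)\to1$ if $\theta_1>1$, $r(t)\to0$ if $\theta_1<1$, and if $\theta_1=1$ the solution converges to a point of the segment $\{(1,0,r):r\in[0,1]\}$.
   Context: This is the two-population replicator system with environmental feedback for the payoff matrices $A(r)=\begin{bmatrix}0.5r&1\\0&0.5\end{bmatrix}$ (population 1) and $B(r)=\begin{bmatrix}0.5&0\\1&0.5r\end{bmatrix}$ (population 2); $x,y$ are the fractions of strategy 1 in populations 1 and 2 and $r\in[0,1]$ is the environmental state. *)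

(* Defs.v *)
From Stdlib Require Import Reals Lra.
Open Scope R_scope.

Definition fx (x y r : R) : R := x * (1 - x) * (r * y / 2 - y / 2 + 1 / 2).
Definition fy (x y r : R) : R := y * (1 - y) * (r * x / 2 - x / 2 - r / 2).
Definition fr (th1 th2 x y r : R) : R :=
  r * (1 - r) * ((1 + th1) * x + (1 + th2) * y - 2).

Definition conv_infty (f : R -> R) (l : R) : Prop :=
  forall eps : R, 0 < eps -> exists T : R, forall t : R, T <= t -> Rabs (f t - l) < eps.

Definition right_cont0 (f : R -> R) : Prop :=
  forall eps : R, 0 < eps -> exists delta : R, 0 < delta /\
    forall t : R, 0 <= t < delta -> Rabs (f t - f 0) < eps.

Definition is_solution (th1 th2 : R) (x y r : R -> R) (x0 y0 r0 : R) : Prop :=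
  x 0 = x0 /\ y 0 = y0 /\ r 0 = r0 /\
  right_cont0 x /\ right_cont0 y /\ right_cont0 r /\
  (forall t : R, 0 < t ->
     derivable_pt_lim x t (fx (x t) (y t) (r t)) /\
     derivable_pt_lim y t (fy (x t) (y t) (r t)) /\
     derivable_pt_lim r t (fr th1 th2 (x t) (y t) (r t))).

(* Main.v *)
From Stdlib Require Import Reals Lra Psatz Classical.
Require Import Defs.
From Coquelicot Require Import Coquelicot.
Open Scope R_scope.

Lemma mvt_nonneg (h h' : R -> R) (a b : R) : a <= b ->
  (forall c, a <= c <= b -> derivable_pt_lim h c (h' c)) ->
  (forall c, a < c < b -> 0 <= h' c) -> h a <= h b.
Proof.
  intros Hab Hd Hp. destruct (Req_dec a b) as [->|Hne]; [lra|].
  destruct (MVT_cor2 h h' a b ltac:(lra) Hd) as [c [Hc1 Hc2]].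
  specialize (Hp c Hc2). nra.
Qed.

Lemma deriv_exp_lin (k a t : R) :
  derivable_pt_lim (fun s => exp (k*(s-a))) t (k * exp (k*(t-a))).
Proof.
  apply is_derive_Reals. auto_derive; auto. unfold Rminus; ring.
Qed.

Lemma deriv_mul_exp (f : R -> R) (d k a t : R) : derivable_pt_lim f t d ->
  derivable_pt_lim (fun s => f s * exp (k*(s-a))) t
    (d * exp (k*(t-a)) + f t * (k * exp (k*(t-a)))).
Proof.
  intros H. apply (derivable_pt_lim_mult f (fun s => exp (k*(s-a))) t d _ H (deriv_exp_lin k a t)).
Qed.

Lemma deriv_one_minus (f : R -> R) (d t : R) : derivable_pt_lim f t d ->
  derivable_pt_lim (fun s => 1 - f s) t (- d).
Proof.
  intros H. replace (-d) with (0 - d) by ring.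
  apply (derivable_pt_lim_minus (fct_cte 1) f t 0 d (derivable_pt_lim_const 1 t) H).
Qed.

Lemma cont_eps (f : R -> R) (t l : R) : derivable_pt_lim f t l ->
  forall eps, 0 < eps -> exists delta, 0 < delta /\ forall u, Rabs (u - t) < delta -> Rabs (f u - f t) < eps.
Proof.
  intros H eps Heps.
  assert (Hc : continuity_pt f t) by (apply derivable_continuous_pt; exists l; exact H).
  destruct (Hc eps Heps) as [d [Hd Hd2]]. exists d; split; auto.
  intros u Hu. destruct (Req_dec u t) as [->|Hne].
  - rewrite Rminus_eq_0, Rabs_R0; auto.
  - apply (Hd2 u). split; [split; [exact I| auto]|]. simpl. unfold R_dist. auto.
Qed.

Lemma exp_nondec (f f' : R -> R) (k a b : R) : a <= b ->
  (forall c, a <= c <= b -> derivable_pt_lim f c (f' c)) ->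
  (forall c, a < c < b -> 0 <= f' c + k * f c) -> f a <= f b * exp (k*(b-a)).
Proof.
  intros Hab Hd Hp.
  pose (h' := fun c => f' c * exp (k*(c-a)) + f c * (k * exp (k*(c-a)))).
  assert (H := mvt_nonneg (fun s => f s * exp (k*(s-a))) h' a b Hab).
  simpl in H. replace (k*(a-a)) with 0 in H by ring. rewrite exp_0, Rmult_1_r in H.
  apply H.
  - intros c Hc. apply deriv_mul_exp. apply Hd; auto.
  - intros c Hc. unfold h'. specialize (Hp c Hc). assert (0 < exp (k*(c-a))) by apply exp_pos. nra.
Qed.

Lemma exp_noninc (f f' : R -> R) (k a b : R) : a <= b ->
  (forall c, a <= c <= b -> derivable_pt_lim f c (f' c)) ->
  (forall c, a < c < b -> f' c + k * f c <= 0) -> f b * exp (k*(b-a)) <= f a.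
Proof.
  intros Hab Hd Hp.
  assert (H := exp_nondec (fun s => - f s) (fun s => - f' s) k a b Hab).
  simpl in H. assert (- f a <= - f b * exp (k * (b - a))); [|lra].
  apply H.
  - intros c Hc. exact (derivable_pt_lim_opp f c (f' c) (Hd c Hc)).
  - intros c Hc. specialize (Hp c Hc). lra.
Qed.

Lemma stay_pos (f f' : R -> R) (M a b : R) : a <= b ->
  (forall c, a <= c <= b -> derivable_pt_lim f c (f' c)) ->
  (forall c, a < c < b -> 0 <= f' c + M * f c) -> 0 < f a -> 0 < f b.
Proof.
  intros Hab Hd Hp Ha. assert (H := exp_nondec f f' M a b Hab Hd Hp).
  assert (0 < exp (M*(b-a))) by apply exp_pos.
  destruct (Rle_or_lt (f b) 0); [|auto]. nra.
Qed.

Lemma decay (f f' : R -> R) (k a b : R) : a <= b ->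
  (forall c, a <= c <= b -> derivable_pt_lim f c (f' c)) ->
  (forall c, a < c < b -> f' c <= - k * f c) -> f b <= f a * exp (- k*(b-a)).
Proof.
  intros Hab Hd Hp.
  assert (H := exp_noninc f f' k a b Hab Hd ltac:(intros c Hc; specialize (Hp c Hc); lra)).
  assert (E : exp (k*(b-a)) * exp (-k*(b-a)) = 1).
  { rewrite <- exp_plus. replace (k*(b-a) + -k*(b-a)) with 0 by ring. apply exp_0. }
  assert (0 < exp (-k*(b-a))) by apply exp_pos.
  assert (f b * exp (k*(b-a)) * exp (-k*(b-a)) <= f a * exp (-k*(b-a))) by (apply Rmult_le_compat_r; lra).
  rewrite Rmult_assoc, E, Rmult_1_r in H1. exact H1.
Qed.

Lemma exp_small (A k a eps : R) : 0 <= A -> 0 < k -> 0 < eps ->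
  exists T, a <= T /\ forall t, T <= t -> A * exp (- k * (t - a)) < eps.
Proof.
  intros HA Hk He.
  set (q := eps / (A + 1)). assert (Hq : 0 < q) by (unfold q; apply Rdiv_lt_0_compat; lra).
  exists (Rmax a (a - ln q / k + 1)). split; [apply Rmax_l|].
  intros t Ht. assert (Ht2 : a - ln q / k + 1 <= t) by (eapply Rle_trans; [apply Rmax_r|exact Ht]).
  assert (Hlt : - k * (t - a) < ln q).
  { assert (E1 : k * (- ln q / k + 1) = - ln q + k) by (field; lra).
    assert (k * (- ln q / k + 1) <= k * (t - a)) by (apply Rmult_le_compat_l; lra). lra. }
  apply exp_increasing in Hlt. rewrite exp_ln in Hlt by auto.
  assert (q * (A + 1) = eps) by (unfold q; field; lra).
  assert (0 < exp (- k * (t - a))) by apply exp_pos. nra.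
Qed.

Lemma conv_exp (f : R -> R) (l A k a : R) : 0 <= A -> 0 < k ->
  (forall t, a <= t -> Rabs (f t - l) <= A * exp (- k * (t - a))) -> conv_infty f l.
Proof.
  intros HA Hk H eps He. destruct (exp_small A k a eps HA Hk He) as [T [HT1 HT2]].
  exists T. intros t Ht. eapply Rle_lt_trans; [apply H; lra|]. apply HT2; auto.
Qed.

Lemma mono_conv (f : R -> R) (a m : R) :
  (forall s t, a <= s <= t -> f t <= f s) -> (forall t, a <= t -> m <= f t) ->
  exists l, conv_infty f l.
Proof.
  intros Hm Hb.
  set (E := fun v => exists t, a <= t /\ v = - f t).
  assert (HE : bound E). { exists (- m). intros v [t [Ht ->]]. specialize (Hb t Ht). lra. }
  assert (HE2 : exists v, E v) by (exists (- f a); exists a; split; [lra|auto]).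
  destruct (completeness E HE HE2) as [L [HL1 HL2]].
  exists (- L). intros eps He.
  destruct (Rle_or_lt L (L - eps)) as [Hc|Hc]; [lra|].
  assert (exists t0, a <= t0 /\ L - eps < - f t0) as [t0 [Ht0 Ht0']].
  { destruct (classic (exists t0, a <= t0 /\ L - eps < - f t0)) as [H|H]; auto.
    exfalso. assert (L <= L - eps); [|lra]. apply HL2. intros v [t [Ht ->]].
    destruct (Rle_or_lt (- f t) (L - eps)); auto. exfalso; apply H; exists t; auto. }
  exists t0. intros t Ht.
  assert (h1 : f t <= f t0) by (apply Hm; lra).
  assert (h2 : - f t <= L) by (apply HL1; exists t; split; [lra|auto]).
  rewrite Rabs_right; lra.
Qed.

Lemma lim_in01 (f : R -> R) (l : R) : conv_infty f l ->
  (forall t, 0 <= t -> 0 < f t < 1) -> 0 <= l <= 1.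
Proof.
  intros Hc Hf. split.
  - destruct (Rle_or_lt 0 l) as [|Hl]; auto. exfalso.
    destruct (Hc (- l) ltac:(lra)) as [T HT]. specialize (HT (Rmax T 0) (Rmax_l _ _)).
    specialize (Hf (Rmax T 0) (Rmax_r _ _)). rewrite Rabs_right in HT; lra.
  - destruct (Rle_or_lt l 1) as [|Hl]; auto. exfalso.
    destruct (Hc (l - 1) ltac:(lra)) as [T HT]. specialize (HT (Rmax T 0) (Rmax_l _ _)).
    specialize (Hf (Rmax T 0) (Rmax_r _ _)). rewrite Rabs_left in HT; lra.
Qed.

Definition good (x y r : R -> R) (t : R) := 0 < x t < 1 /\ 0 < y t < 1 /\ 0 < r t < 1.

Lemma ineq_pos (f h M : R) : 0 < f < 1 -> -M <= h <= M -> 0 <= f*(1-f)*h + M*f.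
Proof. intros. assert (0 < f*(1-f)) by nra. assert (f*(1-f) <= f) by nra. nra. Qed.

Lemma ineq_neg (f h M : R) : 0 < f < 1 -> -M <= h <= M -> 0 <= -(f*(1-f)*h) + M*(1-f).
Proof. intros. assert (0 < f*(1-f)) by nra. assert (f*(1-f) <= 1-f) by nra. nra. Qed.

Lemma h_bounds (th1 th2 a b c : R) : 0 < th1 -> 0 < th2 -> 0 < a < 1 -> 0 < b < 1 -> 0 < c < 1 ->
  let M := 2 + th1 + th2 in
  (-M <= c * b / 2 - b / 2 + 1 / 2 <= M) /\
  (-M <= c * a / 2 - a / 2 - c / 2 <= M) /\
  (-M <= (1 + th1) * a + (1 + th2) * b - 2 <= M).
Proof.
  intros. unfold M. assert (0 < c*b < 1) by nra. assert (0 < c*a < 1) by nra.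
  assert (0 < th1 * a < th1) by nra. assert (0 < th2 * b < th2) by nra.
  repeat split; lra.
Qed.

Lemma near01 (a b : R) : 0 < a < 1 -> Rabs (b - a) < Rmin a (1-a) -> 0 < b < 1.
Proof.
  intros Ha Hb. assert (Rmin a (1-a) <= a) by apply Rmin_l.
  assert (Rmin a (1-a) <= 1 - a) by apply Rmin_r.
  apply Rabs_def2 in Hb. lra.
Qed.

Section Inv.
Variables (th1 th2 : R) (x y r : R -> R).
Hypothesis Hth1 : 0 < th1.
Hypothesis Hth2 : 0 < th2.
Hypothesis HD : forall t : R, 0 < t ->
     derivable_pt_lim x t (fx (x t) (y t) (r t)) /\
     derivable_pt_lim y t (fy (x t) (y t) (r t)) /\
     derivable_pt_lim r t (fr th1 th2 (x t) (y t) (r t)).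

Lemma stay01 (f : R -> R) (h : R -> R) (a b : R) : 0 < a <= b ->
  (forall c, a <= c <= b -> derivable_pt_lim f c (f c * (1 - f c) * h c)) ->
  (forall c, a < c < b -> 0 < f c < 1 /\ -(2+th1+th2) <= h c <= 2+th1+th2) ->
  0 < f a < 1 -> 0 < f b < 1.
Proof.
  intros Hab Hd Hi Ha. split.
  - apply (stay_pos f (fun c => f c * (1 - f c) * h c) (2+th1+th2) a b); try lra; auto.
    intros c Hc. destruct (Hi c Hc). apply ineq_pos; auto.
  - assert (0 < 1 - f b); [|lra].
    apply (stay_pos (fun s => 1 - f s) (fun c => -(f c * (1 - f c) * h c)) (2+th1+th2) a b); try lra; auto.
    + intros c Hc. apply deriv_one_minus. auto.
    + intros c Hc. destruct (Hi c Hc). apply ineq_neg; auto.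
Qed.

Lemma good_step (a b : R) : 0 < a <= b -> (forall c, a < c < b -> good x y r c) ->
  good x y r a -> good x y r b.
Proof.
  intros Hab Hi [Ha1 [Ha2 Ha3]].
  assert (HB : forall c, a < c < b -> let M := 2 + th1 + th2 in
     (-M <= r c * y c / 2 - y c / 2 + 1 / 2 <= M) /\
     (-M <= r c * x c / 2 - x c / 2 - r c / 2 <= M) /\
     (-M <= (1 + th1) * x c + (1 + th2) * y c - 2 <= M)).
  { intros c Hc. destruct (Hi c Hc) as [? [? ?]]. apply h_bounds; auto. }
  split; [|split].
  - apply (stay01 x (fun c => r c * y c / 2 - y c / 2 + 1 / 2) a b); auto.
    + intros c Hc. apply (HD c ltac:(lra)).
    + intros c Hc. split; [apply (Hi c Hc)|apply (HB c Hc)].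
  - apply (stay01 y (fun c => r c * x c / 2 - x c / 2 - r c / 2) a b); auto.
    + intros c Hc. apply (HD c ltac:(lra)).
    + intros c Hc. split; [apply (Hi c Hc)|apply (HB c Hc)].
  - apply (stay01 r (fun c => (1 + th1) * x c + (1 + th2) * y c - 2) a b); auto.
    + intros c Hc. apply (HD c ltac:(lra)).
    + intros c Hc. split; [apply (Hi c Hc)|apply (HB c Hc)].
Qed.

Lemma good_open (t : R) : 0 < t -> good x y r t ->
  exists d, 0 < d /\ forall u, Rabs (u - t) < d -> good x y r u.
Proof.
  intros Ht [Hx [Hy Hr]]. destruct (HD t Ht) as [Dx [Dy Dr]].
  assert (Hmx : 0 < Rmin (x t) (1 - x t)) by (apply Rmin_pos; lra).
  assert (Hmy : 0 < Rmin (y t) (1 - y t)) by (apply Rmin_pos; lra).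
  assert (Hmr : 0 < Rmin (r t) (1 - r t)) by (apply Rmin_pos; lra).
  destruct (cont_eps x t _ Dx _ Hmx) as [d1 [Hd1 H1]].
  destruct (cont_eps y t _ Dy _ Hmy) as [d2 [Hd2 H2]].
  destruct (cont_eps r t _ Dr _ Hmr) as [d3 [Hd3 H3]].
  exists (Rmin d1 (Rmin d2 d3)). split.
  - apply Rmin_pos; auto. apply Rmin_pos; auto.
  - intros u Hu.
    assert (Rmin d1 (Rmin d2 d3) <= d1) by apply Rmin_l.
    assert (Rmin d1 (Rmin d2 d3) <= Rmin d2 d3) by apply Rmin_r.
    assert (Rmin d2 d3 <= d2) by apply Rmin_l.
    assert (Rmin d2 d3 <= d3) by apply Rmin_r.
    split; [|split].
    + apply (near01 (x t)); auto. apply H1; lra.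
    + apply (near01 (y t)); auto. apply H2; lra.
    + apply (near01 (r t)); auto. apply H3; lra.
Qed.
End Inv.

Lemma invariance (th1 th2 x0 y0 r0 : R) (x y r : R -> R) : 0 < th1 -> 0 < th2 ->
  0 < x0 < 1 -> 0 < y0 < 1 -> 0 < r0 < 1 -> is_solution th1 th2 x y r x0 y0 r0 ->
  forall t, 0 <= t -> good x y r t.
Proof.
  intros H1 H2 Hx Hy Hr [Hx0 [Hy0 [Hr0 [Cx [Cy [Cr HD]]]]]] t1 Ht1.
  assert (Hinit : exists d, 0 < d /\ forall u, 0 <= u < d -> good x y r u).
  { assert (Hmx : 0 < Rmin x0 (1 - x0)) by (apply Rmin_pos; lra).
    assert (Hmy : 0 < Rmin y0 (1 - y0)) by (apply Rmin_pos; lra).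
    assert (Hmr : 0 < Rmin r0 (1 - r0)) by (apply Rmin_pos; lra).
    destruct (Cx _ Hmx) as [d1 [Hd1 G1]].
    destruct (Cy _ Hmy) as [d2 [Hd2 G2]].
    destruct (Cr _ Hmr) as [d3 [Hd3 G3]].
    rewrite Hx0 in G1; rewrite Hy0 in G2; rewrite Hr0 in G3.
    exists (Rmin d1 (Rmin d2 d3)). split.
    - apply Rmin_pos; auto. apply Rmin_pos; auto.
    - intros u Hu.
      assert (Rmin d1 (Rmin d2 d3) <= d1) by apply Rmin_l.
      assert (Rmin d1 (Rmin d2 d3) <= Rmin d2 d3) by apply Rmin_r.
      assert (Rmin d2 d3 <= d2) by apply Rmin_l.
      assert (Rmin d2 d3 <= d3) by apply Rmin_r.
      split; [|split].
      + apply (near01 x0); auto. apply G1; lra.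
      + apply (near01 y0); auto. apply G2; lra.
      + apply (near01 r0); auto. apply G3; lra. }
  destruct Hinit as [d [Hd Hd2]].
  destruct (Req_dec t1 0) as [->|Hne]; [apply Hd2; lra|].
  set (A := fun s => 0 <= s <= t1 /\ forall u, 0 < u <= s -> good x y r u).
  assert (HA : bound A) by (exists t1; intros s [Hs _]; lra).
  assert (HA0 : exists s, A s) by (exists 0; split; [lra|intros; lra]).
  destruct (completeness A HA HA0) as [tau [HL1 HL2]].
  assert (Hle : tau <= t1) by (apply HL2; intros s [Hs _]; lra).
  assert (Hbelow : forall u, 0 < u < tau -> good x y r u).
  { intros u Hu. destruct (classic (good x y r u)) as [G|G]; auto. exfalso.
    assert (tau <= u); [|lra]. apply HL2. intros s [Hs Hs2].
    destruct (Rle_or_lt s u); auto. exfalso. apply G, Hs2. lra. }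
  assert (Hpos : 0 < tau).
  { assert (Hm : 0 < Rmin t1 (d/2)) by (apply Rmin_pos; lra).
    assert (Rmin t1 (d/2) <= t1) by apply Rmin_l.
    assert (Rmin t1 (d/2) <= d/2) by apply Rmin_r.
    assert (Rmin t1 (d/2) <= tau); [|lra]. apply HL1. split; [lra|].
    intros u Hu. apply Hd2. lra. }
  assert (Hgt : good x y r tau).
  { apply (good_step th1 th2 x y r H1 H2 HD (tau/2) tau); [lra| |].
    - intros c Hc. apply Hbelow; lra.
    - apply Hbelow; lra. }
  assert (Heq : tau = t1).
  { destruct (Req_dec tau t1) as [E|E]; auto. exfalso.
    destruct (good_open th1 th2 x y r HD tau Hpos Hgt) as [e [He He2]].
    assert (Rmin t1 (tau + e/2) <= t1) by apply Rmin_l.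
    assert (Rmin t1 (tau + e/2) <= tau + e/2) by apply Rmin_r.
    assert (tau < Rmin t1 (tau + e/2)) by (apply Rmin_glb_lt; lra).
    assert (Rmin t1 (tau + e/2) <= tau); [|lra]. apply HL1. split; [lra|].
    intros u Hu. destruct (Rtotal_order u tau) as [Hu2|[Hu2|Hu2]].
    - apply Hbelow; lra.
    - subst; auto.
    - apply He2. rewrite Rabs_right; lra. }
  rewrite <- Heq. exact Hgt.
Qed.

Theorem mainTheorem4 :
  forall (th1 th2 : R), 0 < th1 -> 0 < th2 ->
  forall (x0 y0 r0 : R), 0 < x0 < 1 -> 0 < y0 < 1 -> 0 < r0 < 1 ->
  forall (x y r : R -> R), is_solution th1 th2 x y r x0 y0 r0 ->
    conv_infty x 1 /\ conv_infty y 0 /\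
    (1 < th1 -> conv_infty r 1) /\
    (th1 < 1 -> conv_infty r 0) /\
    (th1 = 1 -> exists rs : R, 0 <= rs <= 1 /\ conv_infty r rs).
Proof.
  intros th1 th2 H1 H2 x0 y0 r0 Hx Hy Hr x y r Hsol.
  assert (G := invariance th1 th2 x0 y0 r0 x y r H1 H2 Hx Hy Hr Hsol).
  destruct Hsol as [_ [_ [_ [_ [_ [_ HD]]]]]].
  assert (Dx : forall c, 0 < c -> derivable_pt_lim x c (fx (x c) (y c) (r c))) by (intros c Hc; apply (HD c Hc)).
  assert (Dy : forall c, 0 < c -> derivable_pt_lim y c (fy (x c) (y c) (r c))) by (intros c Hc; apply (HD c Hc)).
  assert (Dr : forall c, 0 < c -> derivable_pt_lim r c (fr th1 th2 (x c) (y c) (r c))) by (intros c Hc; apply (HD c Hc)).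
  clear HD.
  destruct (G 1 ltac:(lra)) as [Gx1 [Gy1 Gr1]].
  assert (Hxm : forall t, 1 <= t -> x 1 <= x t).
  { intros t Ht. assert (H := exp_nondec x (fun c => fx (x c) (y c) (r c)) 0 1 t Ht).
    replace (0 * (t - 1)) with 0 in H by ring. rewrite exp_0, Rmult_1_r in H. apply H.
    - intros c Hc. apply Dx; lra.
    - intros c Hc. destruct (G c ltac:(lra)) as [[? ?] [[? ?] [? ?]]]. unfold fx.
      assert (0 < x c * (1 - x c)) by nra. assert (0 <= r c * y c) by nra. nra. }
  assert (Hym : forall t, 1 <= t -> y t <= y 1).
  { intros t Ht. assert (H := exp_noninc y (fun c => fy (x c) (y c) (r c)) 0 1 t Ht).
    replace (0 * (t - 1)) with 0 in H by ring. rewrite exp_0, Rmult_1_r in H. apply H.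
    - intros c Hc. apply Dy; lra.
    - intros c Hc. destruct (G c ltac:(lra)) as [[? ?] [[? ?] [? ?]]]. unfold fy.
      assert (0 < y c * (1 - y c)) by nra. assert (r c * x c <= x c) by nra. nra. }
  set (c0 := x 1 * (1 - y 1) / 2).
  assert (Hc0 : 0 < c0) by (unfold c0; nra).
  assert (Hxd : forall t, 1 <= t -> 1 - x t <= (1 - x 1) * exp (- c0 * (t - 1))).
  { intros t Ht. apply (decay (fun s => 1 - x s) (fun c => - fx (x c) (y c) (r c)) c0 1 t Ht).
    - intros c Hc. apply deriv_one_minus. apply Dx; lra.
    - intros c Hc. destruct (G c ltac:(lra)) as [[? ?] [[? ?] [? ?]]]. unfold fx.
      assert (x 1 <= x c) by (apply Hxm; lra). assert (y c <= y 1) by (apply Hym; lra).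
      assert (A1 : 1 - y c * (1 - r c) >= 1 - y 1) by nra.
      assert (A2 : x c * (1 - y c * (1 - r c)) >= x 1 * (1 - y 1)) by nra.
      unfold c0. nra. }
  assert (Hyd : forall t, 1 <= t -> y t <= y 1 * exp (- c0 * (t - 1))).
  { intros t Ht. apply (decay y (fun c => fy (x c) (y c) (r c)) c0 1 t Ht).
    - intros c Hc. apply Dy; lra.
    - intros c Hc. destruct (G c ltac:(lra)) as [[? ?] [[? ?] [? ?]]]. unfold fy.
      assert (x 1 <= x c) by (apply Hxm; lra). assert (y c <= y 1) by (apply Hym; lra).
      assert (A1 : x c * (1 - r c) + r c >= x 1) by nra.
      assert (A2 : (1 - y c) * (x c * (1 - r c) + r c) >= (1 - y 1) * x 1) by nra.
      unfold c0. nra. }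
  set (E := fun t => exp (- c0 * (t - 1))).
  assert (HE : forall t, 0 < E t) by (intros; apply exp_pos).
  assert (Hx1 : forall t, 1 <= t -> 0 <= 1 - x t <= E t).
  { intros t Ht. destruct (G t ltac:(lra)) as [[? ?] _]. specialize (Hxd t Ht). specialize (HE t).
    unfold E in *. split; [lra|nra]. }
  assert (Hy1 : forall t, 1 <= t -> 0 <= y t <= E t).
  { intros t Ht. destruct (G t ltac:(lra)) as [_ [[? ?] _]]. specialize (Hyd t Ht). specialize (HE t).
    unfold E in *. split; [lra|nra]. }
  set (D := 2 + th1 + th2).
  assert (Hg : forall t, 1 <= t ->
     th1 - 1 - D * E t <= (1 + th1) * x t + (1 + th2) * y t - 2 <= th1 - 1 + D * E t).
  { intros t Ht. destruct (Hx1 t Ht). destruct (Hy1 t Ht). specialize (HE t). unfold D. nra. }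
  split; [|split; [|split; [|split]]].
  - apply (conv_exp x 1 1 c0 1); try lra. intros t Ht. destruct (Hx1 t Ht).
    rewrite Rabs_left1 by lra. fold (E t). lra.
  - apply (conv_exp y 0 1 c0 1); try lra. intros t Ht. destruct (Hy1 t Ht).
    rewrite Rminus_0_r, Rabs_right by lra. fold (E t). lra.
  - intros Hth. set (dl := th1 - 1).
    destruct (exp_small D c0 1 (dl/2) ltac:(unfold D; lra) Hc0 ltac:(unfold dl; lra)) as [T [HT HT2]].
    assert (HgT : forall t, T <= t -> dl / 2 <= (1 + th1) * x t + (1 + th2) * y t - 2).
    { intros t Ht. specialize (HT2 t Ht). destruct (Hg t ltac:(lra)). unfold E, dl in *. lra. }
    destruct (G T ltac:(lra)) as [_ [_ [GrT1 GrT2]]].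
    assert (Hrm : forall t, T <= t -> r T <= r t).
    { intros t Ht. assert (H := exp_nondec r (fun c => fr th1 th2 (x c) (y c) (r c)) 0 T t Ht).
      replace (0 * (t - T)) with 0 in H by ring. rewrite exp_0, Rmult_1_r in H. apply H.
      - intros c Hc. apply Dr; lra.
      - intros c Hc. destruct (G c ltac:(lra)) as [_ [_ [? ?]]]. specialize (HgT c ltac:(lra)). unfold fr.
        assert (0 < r c * (1 - r c)) by nra. unfold dl in *. nra. }
    set (kk := r T * (dl / 2)).
    assert (Hkk : 0 < kk) by (unfold kk, dl; nra).
    apply (conv_exp r 1 1 kk T); try lra. intros t Ht.
    assert (H := decay (fun s => 1 - r s) (fun c => - fr th1 th2 (x c) (y c) (r c)) kk T t Ht).
    simpl in H.
    assert (Hd : 1 - r t <= (1 - r T) * exp (- kk * (t - T))).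
    { apply H.
      - intros c Hc. apply deriv_one_minus. apply Dr; lra.
      - intros c Hc. destruct (G c ltac:(lra)) as [_ [_ [? ?]]]. specialize (HgT c ltac:(lra)).
        assert (r T <= r c) by (apply Hrm; lra). unfold fr, kk.
        set (g := (1 + th1) * x c + (1 + th2) * y c - 2) in *.
        assert (r c * g >= r T * (dl/2)) by (unfold dl in *; nra). nra. }
    destruct (G t ltac:(lra)) as [_ [_ [? ?]]].
    assert (0 < exp (- kk * (t - T))) by apply exp_pos.
    rewrite Rabs_left1 by lra. nra.
  - intros Hth. set (dl := 1 - th1).
    destruct (exp_small D c0 1 (dl/2) ltac:(unfold D; lra) Hc0 ltac:(unfold dl; lra)) as [T [HT HT2]].
    assert (HgT : forall t, T <= t -> (1 + th1) * x t + (1 + th2) * y t - 2 <= - (dl / 2)).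
    { intros t Ht. specialize (HT2 t Ht). destruct (Hg t ltac:(lra)). unfold E, dl in *. lra. }
    destruct (G T ltac:(lra)) as [_ [_ [GrT1 GrT2]]].
    assert (Hrm : forall t, T <= t -> r t <= r T).
    { intros t Ht. assert (H := exp_noninc r (fun c => fr th1 th2 (x c) (y c) (r c)) 0 T t Ht).
      replace (0 * (t - T)) with 0 in H by ring. rewrite exp_0, Rmult_1_r in H. apply H.
      - intros c Hc. apply Dr; lra.
      - intros c Hc. destruct (G c ltac:(lra)) as [_ [_ [? ?]]]. specialize (HgT c ltac:(lra)). unfold fr.
        assert (0 < r c * (1 - r c)) by nra. unfold dl in *. nra. }
    set (kk := (1 - r T) * (dl / 2)).
    assert (Hkk : 0 < kk) by (unfold kk, dl; nra).
    apply (conv_exp r 0 1 kk T); try lra. intros t Ht.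
    assert (Hd : r t <= r T * exp (- kk * (t - T))).
    { apply (decay r (fun c => fr th1 th2 (x c) (y c) (r c)) kk T t Ht).
      - intros c Hc. apply Dr; lra.
      - intros c Hc. destruct (G c ltac:(lra)) as [_ [_ [? ?]]]. specialize (HgT c ltac:(lra)).
        assert (r c <= r T) by (apply Hrm; lra). unfold fr, kk.
        set (g := (1 + th1) * x c + (1 + th2) * y c - 2) in *.
        assert ((1 - r c) * g <= - ((1 - r T) * (dl/2))) by (unfold dl in *; nra). nra. }
    destruct (G t ltac:(lra)) as [_ [_ [? ?]]].
    assert (0 < exp (- kk * (t - T))) by apply exp_pos.
    rewrite Rminus_0_r, Rabs_right by lra. nra.
  - intros Hth. subst th1.
    assert (HDc : 0 <= D / c0) by (apply Rlt_le, Rdiv_lt_0_compat; unfold D; lra).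
    set (phi := fun s => r s + D / c0 * exp (- c0 * (s - 1))).
    assert (Dphi : forall c, 0 < c -> derivable_pt_lim phi c
        (fr 1 th2 (x c) (y c) (r c) + D / c0 * (- c0 * exp (- c0 * (c - 1))))).
    { intros c Hc. exact (derivable_pt_lim_plus r _ c _ _ (Dr c Hc)
        (derivable_pt_lim_scal _ (D / c0) c _ (deriv_exp_lin (- c0) 1 c))). }
    assert (Hmono : forall s t, 1 <= s <= t -> phi t <= phi s).
    { intros s t Hst. assert (H := exp_noninc phi (fun c => fr 1 th2 (x c) (y c) (r c) + D / c0 * (- c0 * exp (- c0 * (c - 1)))) 0 s t ltac:(lra)).
      replace (0 * (t - s)) with 0 in H by ring. rewrite exp_0, Rmult_1_r in H. apply H.
      - intros c Hc. apply Dphi; lra.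
      - intros c Hc. destruct (G c ltac:(lra)) as [_ [_ [? ?]]]. specialize (Hg c ltac:(lra)).
        fold (E c). unfold fr.
        replace (D / c0 * (- c0 * E c)) with (- (D * E c)) by (field; lra).
        set (g := (1 + 1) * x c + (1 + th2) * y c - 2) in *.
        assert (0 < r c * (1 - r c) < 1) by nra.
        destruct (Rle_or_lt 0 g); nra. }
    assert (Hlow : forall t, 1 <= t -> 0 <= phi t).
    { intros t Ht. destruct (G t ltac:(lra)) as [_ [_ [? ?]]]. unfold phi.
      assert (0 < exp (- c0 * (t - 1))) by apply exp_pos. nra. }
    destruct (mono_conv phi 1 0 Hmono Hlow) as [l Hl].
    assert (Hrl : conv_infty r l).
    { intros eps He. destruct (Hl (eps/2) ltac:(lra)) as [T1 HT1].
      destruct (exp_small (D / c0) c0 1 (eps/2) HDc Hc0 ltac:(lra)) as [T2 [HT2 HT2']].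
      exists (Rmax T1 T2). intros t Ht.
      assert (T1 <= t) by (eapply Rle_trans; [apply Rmax_l|exact Ht]).
      assert (T2 <= t) by (eapply Rle_trans; [apply Rmax_r|exact Ht]).
      specialize (HT1 t ltac:(lra)). specialize (HT2' t ltac:(lra)).
      assert (0 < exp (- c0 * (t - 1))) by apply exp_pos.
      unfold phi in HT1. apply Rabs_def2 in HT1. apply Rabs_def1; nra. }
    exists l. split; auto. apply (lim_in01 r l Hrl). intros t Ht. apply (G t Ht).
Qed.
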